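(* Let $k\geq 2$, let $G$ be a graph of order $n$, and let $w$ be a vertex of $G$. Suppose that every connected component $C$ of $G-w$ satisfies either $v(C)=2k$ or $e(C)\leq (k-1)\,v(C)$. If $n\geq 6k+13$, then $q(G)<n+2k-2$.
   Context: All graphs are finite and simple. $G-w$ is the graph obtained from $G$ by deleting the vertex $w$. $v(C)$ and $e(C)$ are the numbers of vertices and edges of $C$. For a graph $G$, the signless Laplacian is $Q(G)=D(G)+A(G)$, where $D(G)$ is the diagonal matrix of vertex degrees and $A(G)$ is the adjacency matrix; $q(G)$ denotes the largest eigenvalue of $Q(G)$. *)

(* Defs.v *)
From HB Require Import structures.
From mathcomp Require Import all_boot all_order all_algebra.
Set Implicit Arguments. Unset Strict Implicit. Unset Printing Implicit Defensive.
Import Order.TTheory GRing.Theory Num.Theory.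

Definition simple_graph (T : finType) (e : rel T) : Prop :=
  symmetric e /\ irreflexive e.

Definition deg (T : finType) (e : rel T) (x : T) : nat := #|[set y | e x y]|.

Definition del_rel (T : finType) (e : rel T) (w : T) : rel T :=
  fun x y => [&& e x y, x != w & y != w].

Definition comp_del (T : finType) (e : rel T) (w x : T) : {set T} :=
  [set y | (y != w) && connect (del_rel e w) x y].

Definition ecount (T : finType) (e : rel T) (C : {set T}) : nat :=
  #|[set E : {set T} | (E \subset C) &&
       [exists x : T, exists y : T, [&& x != y, e x y & E == [set x; y]]]]|.

(* signless Laplacian Q(G) = D(G) + A(G), vertices indexed via enum_val *)
Definition signlessQ (R : nzRingType) (T : finType) (e : rel T) : 'M[R]_#|T| :=
  \matrix_(i, j)
    ((if i == j then (deg e (enum_val i))%:R else 0%R) +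
     (e (enum_val i) (enum_val j))%:R)%R.

(* Main.v *)
Require Import Defs.
From HB Require Import structures.
From mathcomp Require Import all_boot all_order all_algebra.
From mathcomp Require Import zify.
Import Order.TTheory GRing.Theory Num.Theory.
Set Implicit Arguments. Unset Strict Implicit. Unset Printing Implicit Defensive.
Lemma c1 (n k d S : nat) : 2 <= k -> d <= 2 * k - 3 -> S <= d * (n-2) -> 6 * k + 13 <= n ->
  S + d * d + n + 1 <= n + 2 * k - 3 + (n + 2 * k - 5) * d.
Proof.
move=> k2 d1 Sd n6.
have h1 : d * d <= d * (2 * k - 3) by apply: leq_mul.
have h2 : d * (n-2) + d * (2 * k - 3) = (n + 2 * k - 5) * d.
  by rewrite -mulnDr mulnC; congr (_ * _); lia.
lia.
Qed.


Lemma c2 (n k S E Bs m : nat) : 2 <= k -> 6 * k + 13 <= n -> m + 1 <= n ->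
  S <= (2 * k - 2) * (2 * k - 2) + Bs -> (2 * k - 2) + S + Bs <= 2 * E -> E <= (k-1) * m ->
  S + (2 * k - 2) * (2 * k - 2) + n + 1 <= n + 2 * k - 3 + (n + 2 * k - 5) * (2 * k - 2).
Proof.
move=> k2 n6 mn h1 h2 h3.
have h4 : (k-1) * m <= (k-1) * (n-1) by apply: leq_mul => //; lia.
have [K eK] : exists K, k = K + 2 by exists (k-2); lia.
have [N eN] : exists N, n = N + 6 * k + 13 by exists (n - (6*k+13)); lia.
subst k n.
have e1 : K + 2 - 1 = K + 1 by lia.
have e2 : N + 6 * (K + 2) + 13 - 1 = N + 6 * K + 24 by lia.
have e3 : 2 * (K + 2) - 2 = 2 * K + 2 by lia.
have e4 : N + 6 * (K + 2) + 13 + 2 * (K + 2) - 3 = N + 8 * K + 26 by lia.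
have e5 : N + 6 * (K + 2) + 13 + 2 * (K + 2) - 5 = N + 8 * K + 24 by lia.
rewrite ?e1 ?e2 ?e3 ?e4 ?e5 in h1 h2 h3 h4 *.
nia.
Qed.

Lemma c3 (n k d S E m : nat) : 2 <= k -> 6 * k + 13 <= n -> m + 1 <= n ->
  2 * k - 1 <= d -> d <= n - 3 ->
  d + S <= 2 * E -> E <= (k-1) * m ->
  S + d * d + n + 1 <= n + 2 * k - 3 + (n + 2 * k - 5) * d.
Proof.
move=> k2 n6 mn d1 d2 h2 h3.
have h4 : (k-1) * m <= (k-1) * (n-1) by apply: leq_mul => //; lia.
have [K eK] : exists K, k = K + 2 by exists (k-2); lia.
have [a ea] : exists a, d = 2 * K + 3 + a by exists (d - (2*k-1)); lia.
have [b eb] : exists b, n = 2 * K + 6 + a + b by exists (n - 3 - d); lia.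
subst n d k.
have e1 : K + 2 - 1 = K + 1 by lia.
have e3 : 2 * K + 6 + a + b - 1 = 2 * K + 5 + a + b by lia.
have e4 : 2 * K + 6 + a + b + 2 * (K + 2) - 3 = 4 * K + 7 + a + b by lia.
have e5 : 2 * K + 6 + a + b + 2 * (K + 2) - 5 = 4 * K + 5 + a + b by lia.
rewrite e1 e3 in h4; rewrite e1 in h3; rewrite e4 e5.
clear e1 e3 e4 e5 d1 d2 k2.
have := leq0n (a * b).
lia.
Qed.

Lemma c4 (n k S E m : nat) : 2 <= k -> 6 * k + 13 <= n -> m + 1 <= n ->
  (n - 2) + S <= 2 * E -> E <= (k-1) * m ->
  S + (n-2) * (n-2) + n <= 1 + n + 2 * k - 3 + (n + 2 * k - 5) * (n - 2).
Proof.
move=> k2 n6 mn h2 h3.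
have h4 : (k-1) * m <= (k-1) * (n-1) by apply: leq_mul => //; lia.
have [K eK] : exists K, k = K + 2 by exists (k-2); lia.
have [N eN] : exists N, n = N + 2 by exists (n-2); lia.
subst n k.
have e1 : K + 2 - 1 = K + 1 by lia.
have e2 : N + 2 - 2 = N by lia.
have e3 : N + 2 - 1 = N + 1 by lia.
have e4 : 1 + (N + 2) + 2 * (K + 2) - 3 = N + 2 * K + 4 by lia.
have e5 : N + 2 + 2 * (K + 2) - 5 = N + 2 * K + 1 by lia.
rewrite e1 e3 in h4; rewrite e1 in h3; rewrite e2 in h2; rewrite e2 e4 e5.
clear e1 e2 e3 e4 e5.
lia.
Qed.

Lemma fin1 (N K d S : nat) : 6 * K + 24 <= N ->
  S + d * d + N + 2 <= N + 2 * K + 2 + (N + 2 * K) * d ->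
  (d + 1) * (N + N * d + d) + (N + 1) * N + (N * d + N * S + S) < (N + 2 * K + 3) * (N + N * d + d).
Proof.
move=> hN h.
have h' := leq_mul (leqnn (N+1)) h.
lia.
Qed.

Lemma fin2 (N K d S : nat) : 6 * K + 24 <= N -> d + 1 = N ->
  S + d * d + N <= N + 2 * K + 2 + (N + 2 * K) * d ->
  (d + 1) * (N + N * d + d) + (N + 1) * N + (N * d + N * S + S) < (N + 2 * K + 3) * (N + N * d + d).
Proof.
move=> hN hd h.
have h' := leq_mul (leqnn (N+1)) h.
lia.
Qed.

Lemma arithA (n k d Y : nat) : 2 <= k -> 6 * k + 13 <= n -> d <= 2 * k - 1 ->
  Y + 1 = n * (2 * k - 1) ->
  (d + 1) * Y + n * (n - 1) + d * Y < (n + 2 * k - 2) * Y.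
Proof.
move=> k2 n6 hd hY.
have [K eK] : exists K, k = K + 2 by exists (k-2); lia.
have [P eP] : exists P, n = P + 6 * K + 25 by exists (n - (6*k+13)); lia.
subst n k.
have e1 : 2 * (K + 2) - 1 = 2 * K + 3 by lia.
have e2 : P + 6 * K + 25 - 1 = P + 6 * K + 24 by lia.
have e3 : P + 6 * K + 25 + 2 * (K + 2) - 2 = P + 8 * K + 27 by lia.
rewrite e1 in hd hY; rewrite e2 e3; clear e1 e2 e3 k2 n6.
have hY' : Y = 2 * K * P + 3 * P + 12 * K * K + 68 * K + 74 by lia.
subst Y.
have h := leq_mul hd (leqnn (2 * K * P + 3 * P + 12 * K * K + 68 * K + 74)).
nia.
Qed.

Lemma arithB (n k d m S E Bs Y SY : nat) : 2 <= k -> 6 * k + 13 <= n -> d + 1 <= m -> m + 1 <= n ->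
  S <= d * (m - 1) -> d + S + Bs <= 2 * E -> E <= (k - 1) * m -> S <= d * d + Bs ->
  Y + 1 = n * (1 + d) -> SY + d = n * (d + S) ->
  (d + 1) * Y + n * (n - 1) + SY < (n + 2 * k - 2) * Y.
Proof.
move=> k2 n6 dm mn Sd SE Em SB hY hS.
have Sd' : S <= d * (n - 2) by apply: leq_trans Sd _; apply: leq_mul => //; lia.
have [K eK] : exists K, k = K + 2 by exists (k-2); lia.
have [N eN] : exists N, n = N + 1 by exists (n-1); lia.
have e1 : n + 2 * k - 3 = N + 2 * K + 2 by lia.
have e2 : n + 2 * k - 5 = N + 2 * K by lia.
have e3 : n - 1 = N by lia.
have e4 : n + 2 * k - 2 = N + 2 * K + 3 by lia.
have hY' : Y = N + N * d + d by subst n; lia.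
have hS' : SY = N * d + N * S + S by subst n; lia.
rewrite e3 e4 hY' hS'.
have hN : 6 * K + 24 <= N by lia.
have [d1|d1] := leqP d (2 * k - 3).
  have := c1 k2 d1 Sd' n6; rewrite e1 e2 eN => H.
  apply: fin1 hN _; lia.
have [d2|d2] := leqP d (2 * k - 2).
  have ed : d = 2 * k - 2 by lia.
  rewrite ed in SE SB.
  have := c2 k2 n6 mn SB SE Em; rewrite e1 e2 eN -ed => H.
  apply: fin1 hN _; lia.
have [d3|d3] := leqP d (n - 3).
  have d2' : 2 * k - 1 <= d by lia.
  have := c3 k2 n6 mn d2' d3 (leq_trans (leq_addr _ _) SE) Em.
  rewrite e1 e2 eN => H.
  apply: fin1 hN _; lia.
have ed : d = n - 2 by lia.
rewrite ed in SE.
have := c4 k2 n6 mn (leq_trans (leq_addr _ _) SE) Em.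
have e5 : 1 + n + 2 * k - 3 = N + 2 * K + 3 by lia.
rewrite e5 e2 -ed eN => H.
apply: fin2 hN _ _; lia.
Qed.
Section Comp.
Variables (T : finType) (e : rel T) (w : T).
Hypothesis esym : symmetric e.
Hypothesis eirr : irreflexive e.

Local Notation del := (del_rel e w).
Local Notation C := (comp_del e w).
Definition nb (p : T) : {set T} := [set q | del p q].
Definition dH (p : T) : nat := #|nb p|.

Lemma del_sym : symmetric del.
Proof. by move=> x y; rewrite /del_rel esym; case: (x != w); case: (y != w); rewrite ?andbT ?andbF. Qed.

Lemma del_irr x : del x x = false.
Proof. by rewrite /del_rel eirr. Qed.

Lemma del_neq x y : del x y -> (x != w) && (y != w).
Proof. by case/and3P => _ -> ->. Qed.

Lemma connect_del_sym : connect_sym del.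
Proof. apply: sym_connect_sym; exact: del_sym. Qed.

Lemma inC p q : (q \in C p) = (q != w) && connect del p q.
Proof. by rewrite inE. Qed.

Lemma C_self p : p != w -> p \in C p.
Proof. by move=> pw; rewrite inC pw connect0. Qed.

Lemma C_same p q : q \in C p -> C q = C p.
Proof.
rewrite inC => /andP [qw cpq]; apply/setP => y; rewrite !inC.
case: (y != w) => //=; apply/idP/idP => H.
  exact: connect_trans cpq H.
by apply: connect_trans H; rewrite connect_del_sym.
Qed.

Lemma C_noW p : w \notin C p.
Proof. by rewrite inC eqxx. Qed.

Lemma nb_C p q : p != w -> q \in nb p -> q \in C p.
Proof. by move=> pw; rewrite inE inC => H; rewrite (connect1 H) andbT; case/del_neq/andP: H. Qed.

Lemma nb_sub p : p != w -> nb p \subset C p :\ p.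
Proof.
move=> pw; apply/subsetP => q qn; rewrite in_setD1 (nb_C pw qn) andbT.
by apply/eqP => E; move: qn; rewrite E inE del_irr.
Qed.

Lemma dH_le p : p != w -> dH p <= #|C p| - 1.
Proof.
move=> pw; rewrite /dH (cardsD1 p (C p)) C_self //.
by rewrite add1n subn1 /=; apply: subset_leq_card; exact: nb_sub.
Qed.

Lemma C_le p : #|C p| <= #|T| - 1.
Proof.
have : C p \subset [set~ w] by apply/subsetP => q; rewrite !inE; case/andP.
by move/subset_leq_card; rewrite cardsC1 subn1.
Qed.

Lemma mem_C_neq p q : q \in C p -> q != w.
Proof. by rewrite inC; case/andP. Qed.



Lemma dH_sum (x : T) : dH x = \sum_y (del x y : nat).
Proof. by rewrite /dH -sum1_card big_mkcond /=; apply: eq_bigr => y _; rewrite inE; case: (del x y). Qed.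

Lemma handshake (Cs : {set T}) :
  (forall x y, x \in Cs -> del x y -> y \in Cs) ->
  \sum_(x in Cs) dH x <= 2 * ecount e Cs.
Proof.
move=> Hcl.
pose A := [set pq : T * T | (pq.1 \in Cs) && del pq.1 pq.2].
pose B := [set pq : T * T | enum_rank pq.1 < enum_rank pq.2].
have -> : \sum_(x in Cs) dH x = #|A|.
  rewrite -sum1_card.
  under eq_bigr => x _ do rewrite /dH -sum1_card.
  rewrite pair_big_dep /=; apply: eq_bigl => pq; by rewrite !inE.
rewrite -(cardsID B A).
have H1 : #|A :\: B| <= #|A :&: B|.
  pose sw := fun pq : T * T => (pq.2, pq.1).
  apply: leq_trans (leq_imset_card sw _).
  apply: subset_leq_card; apply/subsetP => [[x y]]; rewrite !inE /= => /andP [nB /andP [xC dxy]].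
  apply/imsetP; exists (y, x) => //.
  rewrite !inE /= (Hcl _ _ xC dxy) del_sym dxy /=.
  move: nB; rewrite -leqNgt leq_eqVlt => /orP [/eqP E|//].
  by move: dxy; rewrite (enum_rank_inj (ord_inj E)) del_irr.
have H2 : #|A :&: B| <= ecount e Cs.
  pose f := fun pq : T * T => [set pq.1; pq.2].
  rewrite -(card_in_imset (f := f)); last first.
    move=> [a b] [a' b']; rewrite !inE /= => /andP [_ lab] /andP [_ lab']; rewrite /f /= => E.
    have Ha : a \in [set a'; b'] by rewrite -E set21.
    have Ha' : a' \in [set a; b] by rewrite E set21.
    have Hb : b \in [set a'; b'] by rewrite -E set22.
    case/set2P: Ha => Ea.
      subst a'; case/set2P: Hb => Eb; last by rewrite Eb.
      by subst b; move: lab; rewrite ltnn.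
    subst b'; case/set2P: Ha' => Ea'.
      by subst a'; move: lab'; rewrite ltnn.
    by subst a'; move: (ltn_trans lab lab'); rewrite ltnn.
  apply: subset_leq_card; apply/subsetP => E /imsetP [[x y]].
  rewrite !inE /= => /andP [/andP [xC dxy] _] ->.
  apply/andP; split.
    apply/subsetP => z /set2P [] ->; [exact: xC | exact: (Hcl _ _ xC dxy)].
  apply/existsP; exists x; apply/existsP; exists y.
  case/and3P: (dxy) => exy _ _; rewrite exy eqxx andbT andbT.
  by apply/eqP => E'; move: exy; rewrite E' eirr.
lia.
Qed.

Lemma del_C p q : p != w -> del p q -> q \in C p.
Proof. by move=> pw H; apply: nb_C => //; rewrite inE. Qed.

Lemma del_C2 p v y : v \in C p -> del v y -> y \in C p.
Proof. by move=> vC H; rewrite -(C_same vC); apply: del_C (mem_C_neq vC) H. Qed.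

Lemma sumC_split p : p != w ->
  \sum_(x in C p) dH x =
  dH p + \sum_(x in nb p) dH x + \sum_(x in C p :\: (p |: nb p)) dH x.
Proof.
move=> pw; rewrite (big_setID (p |: nb p)).
have -> : C p :&: (p |: nb p) = p |: nb p.
  apply/setIidPr/subsetP => x /setU1P [->|xn]; [exact: C_self | exact: nb_C].
rewrite big_setU1 //= inE del_irr.
by [].
Qed.

Lemma S_bound p : p != w ->
  \sum_(v in nb p) dH v <= dH p * dH p + \sum_(x in C p :\: (p |: nb p)) dH x.
Proof.
move=> pw; set A := nb p; set B := C p :\: (p |: A).
have step : forall v, v \in A ->
   dH v <= dH p + \sum_(y in B) (del v y : nat).
  move=> v vA; rewrite dH_sum (bigID (fun y => y \in p |: A)) /=.
  apply: leq_add.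
    apply: leq_trans (_ : \sum_(y in (p |: A) :\ v) 1 <= _).
      rewrite big_mkcond /= [X in _ <= X]big_mkcond /=; apply: leq_sum => y _.
      rewrite !inE; case: (y =P v) => [->|_]; first by rewrite del_irr; case: (_ || _).
      by case: (_ || _); case: (del v y).
    rewrite sum1_card.
    have : #|p |: A| = (dH p).+1 by rewrite cardsU1 inE del_irr.
    by rewrite (cardsD1 v) (setU1r p vA) add1n => -[->].
  rewrite big_mkcond /= [X in _ <= X]big_mkcond /=; apply: leq_sum => y _.
  case D: (del v y); last by case: (_ \notin _); case: (_ \in _).
  have yC : y \in C p by apply: del_C2 D; apply: nb_C.
  by rewrite /B in_setD yC andbT; case: (_ \in _).
apply: leq_trans (@leq_sum _ (index_enum T) (fun v => v \in A) dH (fun v => dH p + \sum_(y in B) (del v y : nat)) step) _.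
rewrite big_split /= sum_nat_const.
apply: leq_add => //.
rewrite exchange_big /=; apply: leq_sum => x xB.
rewrite dH_sum [X in _ <= X](bigID (fun v => v \in A)) /=.
apply: leq_trans (leq_addr _ _); rewrite big_mkcond /= [X in _ <= X]big_mkcond /=.
by apply: leq_sum => v _; rewrite del_sym; case: (v \in A).
Qed.

Definition Yn (k : nat) (p : T) : nat :=
  if p == w then #|T| * (#|T| - 1)
  else if #|C p| == 2 * k then #|T| * (2 * k - 1) - 1
  else #|T| * (1 + dH p) - 1.

Lemma L1 r q : r != w -> ((q != w) && (C q == C r)) = (q \in C r).
Proof.
move=> rw; apply/idP/idP.
  by case/andP => qw /eqP <-; apply: C_self.
by move=> H; rewrite (mem_C_neq H) (C_same H) eqxx.
Qed.

Lemma comp_sum k r : r != w -> 1 <= #|T| ->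
  (forall x : T, x != w ->
     #|C x| = (2 * k)%N \/ (ecount e (C x) <= (k - 1) * #|C x|)%N) ->
  1 <= k ->
  \sum_(q in C r) Yn k q <= #|C r| * (#|T| * (2 * k - 1) - 1).
Proof.
move=> rw n1 Hc k1.
have Yq : forall q, q \in C r -> Yn k q =
   if #|C r| == 2 * k then #|T| * (2 * k - 1) - 1 else #|T| * (1 + dH q) - 1.
  by move=> q qC; rewrite /Yn (negbTE (mem_C_neq qC)) (C_same qC).
case: eqP Yq => [Em|Em] Yq.
  rewrite (eq_bigr (fun _ => #|T| * (2 * k - 1) - 1)); last by move=> q; move/Yq.
  by rewrite sum_nat_const.
have [//|HE] := Hc r rw.
have hs := handshake (fun x y xC D => del_C2 xC D).
set m := #|C r| in HE Em *.
have H1 : \sum_(q in C r) (Yn k q + 1) = #|T| * (m + \sum_(q in C r) dH q).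
  rewrite (eq_bigr (fun q => #|T| * (1 + dH q))); last first.
    move=> q qC; rewrite (Yq q qC); have : 0 < #|T| * (1 + dH q) by rewrite muln_gt0 n1.
    lia.
  by rewrite -big_distrr /= big_split /= sum_nat_const muln1.
have H2 : \sum_(q in C r) (Yn k q + 1) = \sum_(q in C r) Yn k q + m.
  by rewrite big_split /= sum_nat_const muln1.
have H3 : #|T| * (m + \sum_(q in C r) dH q) <= #|T| * (m * (2 * k - 1)).
  apply: leq_mul => //.
  have := hs r; have := leq_mul (leqnn 2) HE.
  have e1 : (k - 1) * m = k * m - m by rewrite mulnBl mul1n.
  have e2 : m * (2 * k - 1) = 2 * (k * m) - m by rewrite mulnBr muln1 mulnCA (mulnC m k).
  have e3 : m <= k * m by rewrite leq_pmull.
  rewrite e1 e2; lia.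
have H4 : m * (#|T| * (2 * k - 1) - 1) + m = #|T| * (m * (2 * k - 1)).
  rewrite mulnBr muln1 subnK; first by rewrite mulnCA.
  by apply: leq_pmulr; rewrite muln_gt0 n1; lia.
lia.
Qed.

Lemma total_sum k : 1 <= #|T| ->
  (forall x : T, x != w ->
     #|C x| = (2 * k)%N \/ (ecount e (C x) <= (k - 1) * #|C x|)%N) ->
  1 <= k ->
  \sum_(q | q != w) Yn k q <= (#|T| - 1) * (#|T| * (2 * k - 1) - 1).
Proof.
move=> n1 Hc k1.
set Q := fun Cs : {set T} => [exists r, (r != w) && (Cs == C r)].
rewrite (partition_big (fun q => C q) Q) /=; last first.
  by move=> q qw; apply/existsP; exists q; rewrite qw eqxx.
apply: leq_trans (_ : \sum_(Cs | Q Cs) (\sum_(q | (q != w) && (C q == Cs)) 1) * (#|T| * (2 * k - 1) - 1) <= _).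
  apply: leq_sum => Cs /existsP [r /andP [rw /eqP ->]].
  rewrite (eq_bigl (fun q => q \in C r)); last by move=> q; exact: L1 q rw.
  rewrite [X in _ <= X * _](eq_bigl (fun q => q \in C r)); last by move=> q; exact: L1 q rw.
  by rewrite sum1_card; apply: comp_sum.
rewrite -big_distrl /= -(partition_big (fun q => C q) Q) /=; last first.
  by move=> q qw; apply/existsP; exists q; rewrite qw eqxx.
by rewrite sum1_card cardC1 !subn1.
Qed.

Lemma local_nw k p : 2 <= k -> 6 * k + 13 <= #|T| ->
  (forall x : T, x != w ->
     #|C x| = (2 * k)%N \/ (ecount e (C x) <= (k - 1) * #|C x|)%N) ->
  p != w ->
  deg e p * Yn k p + \sum_q (e p q : nat) * Yn k q < (#|T| + 2 * k - 2) * Yn k p.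
Proof.
move=> k2 n6 Hc pw.
have n1 : 1 <= #|T| by lia.
have hdeg : deg e p <= dH p + 1.
  rewrite /deg; apply: leq_trans (_ : #|w |: nb p| <= _).
    apply: subset_leq_card; apply/subsetP => y; rewrite !inE => epy.
    case: (y =P w) => //= /eqP yw; by rewrite /del_rel epy pw yw.
  rewrite cardsU1 /dH; case: (w \notin nb p) => /=; lia.
have wn : w \notin nb p by rewrite inE /del_rel eqxx !andbF.
have hsum : \sum_q (e p q : nat) * Yn k q <= Yn k w + \sum_(q in nb p) Yn k q.
  rewrite -(big_setU1 _ wn) /= [X in _ <= X]big_mkcond /=; apply: leq_sum => q _.
  case epq: (e p q); rewrite ?mul0n // mul1n.
  have -> // : q \in w |: nb p.
  by rewrite !inE; case: (q =P w) => //= /eqP qw; rewrite /del_rel epq pw qw.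
have hYw : Yn k w = #|T| * (#|T| - 1) by rewrite /Yn eqxx.
have nbY : forall q, q \in nb p -> Yn k q =
   if #|C p| == 2 * k then #|T| * (2 * k - 1) - 1 else #|T| * (1 + dH q) - 1.
  move=> q qn; have qC := nb_C pw qn.
  by rewrite /Yn (negbTE (mem_C_neq qC)) (C_same qC).
have hdl := dH_le pw.
have m1 : 0 < #|C p| by apply/card_gt0P; exists p; exact: C_self pw.
have mle := C_le p.
case: (#|C p| =P 2 * k) nbY => Em nbY.
  have Yp : Yn k p = #|T| * (2 * k - 1) - 1 by rewrite /Yn (negbTE pw) Em eqxx.
  set b := #|T| * (2 * k - 1) - 1 in Yp nbY *.
  have hs : \sum_(q in nb p) Yn k q = dH p * b.
    by rewrite (eq_bigr (fun _ => b)) ?sum_nat_const // => q /nbY.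
  have hb : b + 1 = #|T| * (2 * k - 1).
    have : 0 < #|T| * (2 * k - 1) by rewrite muln_gt0; lia.
    rewrite /b; lia.
  have hd : dH p <= 2 * k - 1 by rewrite -Em.
  have := arithA k2 n6 hd hb.
  have := leq_mul hdeg (leqnn b).
  rewrite Yp hYw in hsum *; rewrite hs in hsum.
  lia.
have HE : ecount e (C p) <= (k - 1) * #|C p| by case: (Hc p pw).
have Yp : Yn k p = #|T| * (1 + dH p) - 1.
  by rewrite /Yn (negbTE pw) /=; case: ifP => [/eqP Em2|//]; by case: Em.
set S := \sum_(q in nb p) dH q.
set Bs := \sum_(x in C p :\: (p |: nb p)) dH x.
have hSY : \sum_(q in nb p) Yn k q + dH p = #|T| * (dH p + S).
  have -> : \sum_(q in nb p) Yn k q + dH p = \sum_(q in nb p) (Yn k q + 1).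
    by rewrite big_split /= sum_nat_const muln1.
  rewrite (eq_bigr (fun q => #|T| * (1 + dH q))); last first.
    move=> q qn; rewrite (nbY q qn) /=.
    by rewrite subnK // muln_gt0 n1.
  by rewrite -big_distrr /= big_split /= sum_nat_const muln1.
have hSd : S <= dH p * (#|C p| - 1).
  rewrite /S (eq_bigr (fun q => dH q)) //.
  apply: leq_trans (_ : \sum_(q in nb p) (#|C p| - 1) <= _).
    apply: leq_sum => q qn; have qC := nb_C pw qn.
    by rewrite -(C_same qC); apply: dH_le (mem_C_neq qC).
  by rewrite sum_nat_const.
have hSE : dH p + S + Bs <= 2 * ecount e (C p).
  by rewrite -sumC_split //; apply: (handshake (fun x y xC D => del_C2 xC D)).
have hSB : S <= dH p * dH p + Bs by apply: S_bound.
have hY : #|T| * (1 + dH p) - 1 + 1 = #|T| * (1 + dH p).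
  by rewrite subnK // muln_gt0 n1.
have f1 : dH p + 1 <= #|C p| by lia.
have f2 : #|C p| + 1 <= #|T| by lia.
have h2 := arithB k2 n6 f1 f2 hSd hSE HE hSB hY hSY.
have h1 := leq_mul hdeg (leqnn (#|T| * (1 + dH p) - 1)).
rewrite Yp hYw in hsum *.
apply: leq_ltn_trans h2; rewrite -addnA; exact: leq_add h1 hsum.
Qed.

Lemma arithW (n k D Sm b : nat) : 2 <= k -> 2 <= n -> D <= n - 1 -> Sm <= (n - 1) * b ->
  b + 1 = n * (2 * k - 1) ->
  D * (n * (n - 1)) + Sm < (n + 2 * k - 2) * (n * (n - 1)).
Proof.
move=> k2 n2 hD hS hb.
have [K eK] : exists K, k = K + 2 by exists (k-2); lia.
have [N eN] : exists N, n = N + 2 by exists (n-2); lia.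
subst n k.
have e1 : N + 2 - 1 = N + 1 by lia.
have e2 : 2 * (K + 2) - 1 = 2 * K + 3 by lia.
have e3 : N + 2 + 2 * (K + 2) - 2 = N + 2 * K + 4 by lia.
rewrite e1 in hD hS *; rewrite e2 in hb; rewrite e3.
clear e1 e2 e3.
have h1 := leq_mul hD (leqnn ((N + 2) * (N + 1))).
have hb' : b = 2 * K * N + 3 * N + 4 * K + 5 by lia.
subst b.
lia.
Qed.

Lemma local_w k : 2 <= k -> 6 * k + 13 <= #|T| ->
  (forall x : T, x != w ->
     #|C x| = (2 * k)%N \/ (ecount e (C x) <= (k - 1) * #|C x|)%N) ->
  deg e w * Yn k w + \sum_q (e w q : nat) * Yn k q < (#|T| + 2 * k - 2) * Yn k w.
Proof.
move=> k2 n6 Hc.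
have hdeg : deg e w <= #|T| - 1.
  rewrite /deg subn1 -(cardsC1 w); apply: subset_leq_card; apply/subsetP => y.
  by rewrite !inE; apply: contraTneq => ->; rewrite eirr.
have hsum : \sum_q (e w q : nat) * Yn k q <= \sum_(q | q != w) Yn k q.
  rewrite [X in _ <= X]big_mkcond /=; apply: leq_sum => q _.
  case: (q =P w) => [->|_] /=; first by rewrite eirr.
  by case: (e w q); rewrite ?mul1n ?mul0n.
have n1 : 1 <= #|T| by lia.
have k1 : 1 <= k by lia.
have ht := total_sum n1 Hc k1.
have hb : #|T| * (2 * k - 1) - 1 + 1 = #|T| * (2 * k - 1).
  rewrite subnK // muln_gt0 n1 /=; lia.
have hYw : Yn k w = #|T| * (#|T| - 1) by rewrite /Yn eqxx.
rewrite hYw.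
apply: arithW k2 _ hdeg _ hb; first lia.
exact: leq_trans hsum ht.
Qed.
End Comp.

Lemma QYn (T : finType) (e : rel T) (Y : T -> nat) (i : 'I_#|T|) :
  \sum_(j < #|T|) ((if i == j then deg e (enum_val i) else 0) + e (enum_val i) (enum_val j)) * Y (enum_val j)
  = deg e (enum_val i) * Y (enum_val i) + \sum_q (e (enum_val i) q : nat) * Y q.
Proof.
rewrite (eq_bigr (fun j => (if i == j then deg e (enum_val i) else 0) * Y (enum_val j) + (e (enum_val i) (enum_val j) : nat) * Y (enum_val j))); last first.
  by move=> j _; case: (i == j); case: (e _ _); lia.
rewrite big_split /=; congr (_ + _).
  rewrite (bigD1 i) //= eqxx big1 ?addn0 // => j /negbTE; rewrite eq_sym => ->.
  by rewrite mul0n.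
rewrite -(big_enum_val (A := predT) (fun q => (e (enum_val i) q : nat) * Y q)).
by apply: eq_bigl.
Qed.

Unset Implicit Arguments.

Theorem corollary2 (R : rcfType) (T : finType) (e : rel T) (w : T) (k : nat) :
  simple_graph e ->
  (2 <= k)%N ->
  (forall x : T, x != w ->
     #|comp_del e w x| = (2 * k)%N \/
     (ecount e (comp_del e w x) <= (k - 1) * #|comp_del e w x|)%N) ->
  (6 * k + 13 <= #|T|)%N ->
  forall a : R, eigenvalue (signlessQ R e) a ->
    (a < (#|T| + 2 * k - 2)%:R)%R.
Proof.
move=> [esym eirr] k2 Hc n6 a /eigenvalueP [v Hv vnz].
set Q := signlessQ R e in Hv.
set N := (#|T| + 2 * k - 2)%N.
pose Yv (p : T) : nat := Yn e w k p.
pose Y (j : 'I_#|T|) : R := ((Yv (enum_val j))%:R)%R.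
pose z (j : 'I_#|T|) : R := `|v ord0 j|%R.
have Qn : forall i j, (Q i j = ((if i == j then deg e (enum_val i) else 0) + e (enum_val i) (enum_val j))%:R)%R.
  by move=> i j; rewrite /Q /signlessQ mxE natrD; case: (i == j).
have Qge0 : forall i j, (0 <= Q i j)%R by move=> i j; rewrite Qn ler0n.
have step1 : forall j, (a * z j <= \sum_i z i * Q i j)%R.
  move=> j.
  have : ((v *m Q) ord0 j = (a *: v) ord0 j)%R by rewrite Hv.
  rewrite !mxE => Ej.
  apply: le_trans (ler_wpM2r (normr_ge0 _) (ler_norm a)) _.
  rewrite /z -normrM -Ej.
  apply: le_trans (ler_norm_sum _ _ _) _.
  by apply: ler_sum => i _; rewrite normrM (ger0_norm (Qge0 i j)).
have QY : forall i, (\sum_j Q i j * Y j = (deg e (enum_val i) * Yv (enum_val i) + \sum_q (e (enum_val i) q : nat) * Yv q)%:R)%R.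
  move=> i; rewrite -QYn natr_sum; apply: eq_bigr => j _.
  by rewrite Qn natrM.
have loc : forall i, (\sum_j Q i j * Y j < N%:R * Y i)%R.
  move=> i; rewrite QY /Y -natrM ltr_nat /Yv /N.
  case: (enum_val i =P w) => [->|/eqP pw].
    exact: local_w.
  exact: local_nw.
have [i0 vi0] : exists i0, v ord0 i0 != 0%R.
  apply/existsP; move: vnz; apply: contraR; rewrite negb_exists => /forallP H.
  apply/eqP/rowP => j; rewrite mxE; move: (H j); by rewrite negbK => /eqP.
have z0 : forall i, (0 <= z i)%R by move=> i; exact: normr_ge0.
have zi0 : (0 < z i0)%R by rewrite /z normr_gt0.
have Y0 : forall i, (0 < Y i)%R.
  move=> i; rewrite /Y ltr0n /Yv /Yn.
  case: eqP => _; first by rewrite muln_gt0; apply/andP; split; lia.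
  case: eqP => _.
    have : (2 * #|T| <= #|T| * (2 * k - 1))%N.
      rewrite mulnC; apply: leq_mul => //; lia.
    lia.
  have : (#|T| <= #|T| * (1 + dH e w (enum_val i)))%N by apply: leq_pmulr.
  lia.
set W := (\sum_j z j * Y j)%R.
have W0 : (0 < W)%R.
  rewrite /W (bigD1 i0) //=; apply: ltr_wpDr.
    by apply: sumr_ge0 => i _; apply: mulr_ge0 => //; apply: ltW.
  exact: mulr_gt0.
rewrite -(ltr_pM2r W0).
have L1 : (a * W <= \sum_i z i * (\sum_j Q i j * Y j))%R.
  rewrite /W mulr_sumr.
  have L2 : (\sum_j a * (z j * Y j) <= \sum_j (\sum_i z i * Q i j) * Y j)%R.
    apply: ler_sum => j _; rewrite mulrA; apply: ler_wpM2r; first exact: ltW.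
    exact: step1.
  apply: le_trans L2 _.
  rewrite (eq_bigr (fun j => \sum_i z i * Q i j * Y j)%R); last by move=> j _; rewrite mulr_suml.
  rewrite exchange_big /=; apply: ler_sum => i _; rewrite mulr_sumr.
  by apply: ler_sum => j _; rewrite mulrA.
apply: le_lt_trans L1 _.
have -> : (N%:R * W = \sum_i z i * (N%:R * Y i))%R.
  rewrite /W mulr_sumr; apply: eq_bigr => i _; by rewrite mulrCA.
rewrite (bigD1 i0) //= [X in (_ < X)%R](bigD1 i0) //=.
apply: ltr_leD.
  by rewrite ltr_pM2l //; apply: loc.
apply: ler_sum => i _; apply: ler_wpM2l => //.
by apply: ltW; apply: loc.
Qed.
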